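(* Let $\Sigma\in\mathbb{R}^{J\times J}$ be symmetric positive definite, let $\gamma_1>0$, $\gamma_2>0$, and fix $y\in\mathbb{R}^J$. Define the ambiguity sets \[ \mathcal{D}_{\tilde s}=\Bigl\{\mathbb{P}\in\mathcal{P}(\mathbb{R}^J):\ \mathbb{E}_{\mathbb{P}}[\tilde s]^{\top}\Sigma^{-1}\mathbb{E}_{\mathbb{P}}[\tilde s]\le\gamma_1,\ \ \mathbb{E}_{\mathbb{P}}[\tilde s\tilde s^{\top}]\preceq\gamma_2\Sigma\Bigr\} \] for a random vector $\tilde s$ in $\mathbb{R}^J$, and \[ \mathcal{D}_{\tilde\xi}=\Bigl\{\mathbb{P}\in\mathcal{P}(\mathbb{R}):\ |\mathbb{E}_{\mathbb{P}}[\tilde\xi]|\le\sqrt{\gamma_1}\sqrt{y^{\top}\Sigma y},\ \ \mathbb{E}_{\mathbb{P}}[\tilde\xi^2]\le\gamma_2\,(y^{\top}\Sigma y)\Bigr\} \] for a random variable $\tilde\xi$ in $\mathbb{R}$. Then for every Borel measurable function $f:\mathbb{R}\to\mathbb{R}$, \[ \inf_{\mathbb{P}\in\mathcal{D}_{\tilde s}}\mathbb{P}\{f(y^{\top}\tilde s)\le 0\}\ =\ \inf_{\mathbb{P}\in\mathcal{D}_{\tilde\xi}}\mathbb{P}\{f(\tilde\xi)\le 0\}. \]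
   Context: $\mathcal{P}(\mathbb{R}^n)$ denotes the set of all probability distributions on $\mathbb{R}^n$ (for which the relevant first and second moments exist); in $\mathcal{D}_{\tilde s}$, $\tilde s$ is distributed according to $\mathbb{P}$, and in $\mathcal{D}_{\tilde\xi}$, $\tilde\xi$ is distributed according to $\mathbb{P}$. $A\preceq B$ means $B-A$ is positive semidefinite. *)

(* Defs.v *)
From HB Require Import structures.
From mathcomp Require Import all_boot all_order all_algebra.
From mathcomp Require Import all_classical all_reals all_analysis.
Set Implicit Arguments. Unset Strict Implicit. Unset Printing Implicit Defensive.
Import Order.TTheory GRing.Theory Num.Theory.
Import numFieldNormedType.Exports.
Local Open Scope classical_set_scope.
Local Open Scope ring_scope.

(* R^J is modelled as J.-tuple R, with the library's product (Borel)
   sigma-algebra generated by the coordinate projections. *)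

Section Defs.
Variable R : realType.

Definition vec_of (J : nat) (x : J.-tuple R) : 'cV[R]_J := \col_i tnth x i.

Definition sc (M : 'M[R]_1) : R := M 0 0.

Definition psd (J : nat) (A : 'M[R]_J) : Prop :=
  forall v : 'cV[R]_J, 0 <= sc (v^T *m A *m v).

Definition loewner_le (J : nat) (A B : 'M[R]_J) : Prop := psd (B - A).

Definition spd (J : nat) (S : 'M[R]_J) : Prop :=
  S^T = S /\ forall v : 'cV[R]_J, v != 0 -> 0 < sc (v^T *m S *m v).

Definition has_moments2 (J : nat) (P : probability (J.-tuple R) R) : Prop :=
  forall i : 'I_J,
    P.-integrable setT (fun x => (tnth x i)%:E) /\
    P.-integrable setT (fun x => (tnth x i ^+ 2)%:E).

Definition mean_vec (J : nat) (P : probability (J.-tuple R) R) : 'cV[R]_J :=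
  \col_i fine (\int[P]_x (tnth x i)%:E).

Definition second_moment (J : nat) (P : probability (J.-tuple R) R) : 'M[R]_J :=
  \matrix_(i, j) fine (\int[P]_x (tnth x i * tnth x j)%:E).

Definition amb_s (J : nat) (Sigma : 'M[R]_J) (g1 g2 : R)
  : set (probability (J.-tuple R) R) :=
  [set P | has_moments2 P /\
           sc ((mean_vec P)^T *m invmx Sigma *m mean_vec P) <= g1 /\
           loewner_le (second_moment P) (g2 *: Sigma)].

Definition amb_xi (J : nat) (Sigma : 'M[R]_J) (g1 g2 : R) (y : 'cV[R]_J)
  : set (probability R R) :=
  [set P | P.-integrable setT (fun x : R => x%:E) /\
           P.-integrable setT (fun x : R => (x ^+ 2)%:E) /\
           `| fine (\int[P]_x x%:E) | <= Num.sqrt g1 * Num.sqrt (sc (y^T *m Sigma *m y)) /\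
           fine (\int[P]_x (x ^+ 2)%:E) <= g2 * sc (y^T *m Sigma *m y)].

End Defs.

(* Main.v *)
Require Import Defs.
From HB Require Import structures.
From mathcomp Require Import all_boot all_order all_algebra.
From mathcomp Require Import all_classical all_reals all_analysis.
From mathcomp Require Import measurable_realfun ring lra.
Import Order.TTheory GRing.Theory Num.Theory.
Import numFieldNormedType.Exports.
Local Open Scope classical_set_scope.
Local Open Scope ring_scope.

Section Mat.
Variable R : realType.
Variable J : nat.
Implicit Types (S : 'M[R]_J) (u v w : 'cV[R]_J).

Definition B S u v := sc (u^T *m S *m v).

Lemma sc_tr (M : 'M[R]_1) : sc M^T = sc M.
Proof. by rewrite /sc !mxE. Qed.

Lemma B_sym S u v : S^T = S -> B S u v = B S v u.
Proof.
move=> ST; rewrite /B -sc_tr !trmx_mul trmxK ST mulmxA //.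
Qed.

Lemma B_linl S a u v w : B S (a *: u + v) w = a * B S u w + B S v w.
Proof.
by rewrite /B linearD linearZ /= !mulmxDl -!scalemxAl /sc !mxE.
Qed.

Lemma B_linr S a u v w : B S w (a *: u + v) = a * B S w u + B S w v.
Proof.
by rewrite /B mulmxDr -scalemxAr /sc !mxE.
Qed.

Lemma B0r S u : B S u 0 = 0.
Proof. by rewrite /B mulmx0 /sc mxE. Qed.

Lemma spd_ge0 S w : spd S -> 0 <= B S w w.
Proof.
case=> _ H; have [->|w0] := eqVneq w 0; first by rewrite B0r.
exact/ltW/H.
Qed.

Lemma cs S u v : spd S -> B S u v ^+ 2 <= B S u u * B S v v.
Proof.
move=> hS; have [->|v0] := eqVneq v 0; first by rewrite !B0r expr2 !mul0r mulr0.
have bp : 0 < B S v v by case: hS => _ H; exact: H.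
set a := B S u v; set b := B S v v; set c := B S u u.
set s := - (a / b).
have sb : s * b = - a by rewrite /s mulNr divfK // gt_eqF.
have := @spd_ge0 S (s *: v + u) hS.
rewrite B_linl !B_linr (@B_sym S v u) ?(proj1 hS) // -/a -/b -/c => h.
rewrite sb addNr mulr0 add0r in h.
have h2 := mulr_ge0 h (ltW bp).
have e : s * a * b = - a ^+ 2 by rewrite -mulrA (mulrC a) mulrA sb; ring.
rewrite mulrDl e -/b in h2; lra.
Qed.

Lemma spd_unit S : spd S -> S \in unitmx.
Proof.
move=> [ST H]; rewrite unitmxE unitfE; apply/negP => /det0P [v v0 vS].
have : v^T != 0 by apply: contra v0 => /eqP h; apply/eqP; rewrite -(trmxK v) h trmx0.
move/H; rewrite trmxK vS mul0mx /sc mxE ltxx //.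
Qed.

Lemma inv_sym S : spd S -> (invmx S)^T = invmx S.
Proof. by case=> ST _; rewrite trmx_inv ST. Qed.

Lemma cs_inv S y m : spd S ->
  sc (y^T *m m) ^+ 2 <= sc (m^T *m invmx S *m m) * B S y y.
Proof.
move=> hS; have uS := spd_unit S hS.
set u := invmx S *m m.
have e1 : sc (y^T *m m) = B S y u by by rewrite /B /u -mulmxA mulKVmx.
have e2 : sc (m^T *m invmx S *m m) = B S u u.
  by rewrite /B /u trmx_mul inv_sym // -!mulmxA mulKmx.
rewrite e1 e2 mulrC; exact: (cs S y u hS).
Qed.

Lemma scB (A C : 'M[R]_1) : sc (A - C) = sc A - sc C.
Proof. by rewrite /sc !mxE. Qed.
Lemma scD (A C : 'M[R]_1) : sc (A + C) = sc A + sc C.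
Proof. by rewrite /sc !mxE. Qed.
Lemma scZ a (A : 'M[R]_1) : sc (a *: A) = a * sc A.
Proof. by rewrite /sc !mxE. Qed.

Lemma sqrt_bound (a g q : R) : 0 <= g -> 0 <= q ->
  (`|a| <= Num.sqrt g * Num.sqrt q) <-> (a ^+ 2 <= g * q).
Proof.
move=> g0 q0; rewrite -sqrtrM // -sqrtr_sqr.
by split => [h|h]; [rewrite -ler_sqrt ?mulr_ge0 //; apply: le_trans h; rewrite le_eqVlt eqxx | rewrite ler_sqrt ?mulr_ge0].
Qed.

Lemma mean_L S y m g1 : spd S -> 0 <= g1 ->
  sc (m^T *m invmx S *m m) <= g1 ->
  `|sc (y^T *m m)| <= Num.sqrt g1 * Num.sqrt (B S y y).
Proof.
move=> hS g0 h; rewrite sqrt_bound //; last exact: spd_ge0.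
apply: (le_trans (cs_inv S y m hS)); apply: ler_wpM2r => //; exact: spd_ge0.
Qed.

Lemma mom_L S y M g2 : loewner_le M (g2 *: S) ->
  sc (y^T *m M *m y) <= g2 * B S y y.
Proof.
move=> /(_ y); by rewrite mulmxBr mulmxBl -scalemxAr -scalemxAl scB scZ subr_ge0.
Qed.

Definition cvec S y := (B S y y)^-1 *: (S *m y).

Lemma BZZ (k l : R) u v (A : 'M[R]_J) :
  sc ((k *: u)^T *m A *m (l *: v)) = k * l * sc (u^T *m A *m v).
Proof.
have -> : (k *: u)^T = k *: u^T by apply/matrixP => i j; rewrite !mxE.
rewrite -scalemxAr -scalemxAl -scalemxAl !scZ; ring.
Qed.

Lemma mean_c S y a g1 : spd S -> 0 <= g1 ->
  `|a| <= Num.sqrt g1 * Num.sqrt (B S y y) ->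
  sc ((a *: cvec S y)^T *m invmx S *m (a *: cvec S y)) <= g1.
Proof.
move=> hS g0; have q0 := spd_ge0 S y hS; rewrite sqrt_bound // => h.
have uS := spd_unit S hS.
rewrite /cvec scalerA BZZ trmx_mul (proj1 hS) -!mulmxA mulKmx // mulmxA -/(B S y y).
set q := B S y y.
have [->|qn0] := eqVneq q 0.
  by rewrite invr0 !mulr0.
have qp : 0 < q by rewrite lt_def qn0.
have -> : a * q^-1 * (a * q^-1) * q = a ^+ 2 / q.
  by field; rewrite qn0.
by rewrite ler_pdivrMr.
Qed.

Lemma sc_mul (X Y : 'M[R]_1) : sc (X *m Y) = sc X * sc Y.
Proof. by rewrite /sc !mxE big_ord1. Qed.

Lemma sc_outer (v c : 'cV[R]_J) : sc (v^T *m (c *m c^T) *m v) = sc (v^T *m c) ^+ 2.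
Proof.
by rewrite !mulmxA -mulmxA sc_mul -(trmxK v) -trmx_mul sc_tr trmxK expr2.
Qed.

Lemma mom_c S y e g2 : spd S -> 0 <= g2 -> e <= g2 * B S y y ->
  loewner_le (e *: (cvec S y *m (cvec S y)^T)) (g2 *: S).
Proof.
move=> hS g0 h v; have q0 := spd_ge0 S y hS.
have hcv : sc (v^T *m cvec S y) = (B S y y)^-1 * B S v y.
  by rewrite /cvec -scalemxAr scZ mulmxA.
move: (cvec S y) hcv => c hcv.
rewrite mulmxBr mulmxBl -!scalemxAr -!scalemxAl scB !scZ sc_outer -/(B S v v) hcv subr_ge0.
set q := B S y y.
have [->|qn0] := eqVneq q 0.
  by rewrite invr0 mul0r expr0n mulr0; apply: mulr_ge0 => //; exact: spd_ge0.
have qp : 0 < q by rewrite lt_def qn0.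
have := cs S v y hS; rewrite -/q => hc.
have vp := spd_ge0 S v hS.
rewrite exprMn.
apply: (le_trans (y := g2 * q * (q ^-1 ^+ 2 * B S v y ^+ 2))).
  by apply: ler_wpM2r => //; apply: mulr_ge0; apply: sqr_ge0.
rewrite -mulrA; apply: ler_wpM2l => //.
have -> : q * (q^-1 ^+ 2 * B S v y ^+ 2) = B S v y ^+ 2 / q by field; rewrite qn0.
by rewrite ler_pdivrMr.
Qed.
End Mat.

Section Gen.
Context d (T : measurableType d) (R : realType) (mu : {measure set T -> \bar R}).

Lemma int_sum I (s : seq I) (F : I -> T -> R) :
  (forall i, mu.-integrable setT (EFin \o F i)) ->
  mu.-integrable setT (EFin \o (fun x => \sum_(i <- s) F i x)).
Proof.
move=> h; elim: s => [|i s ih].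
  have -> : EFin \o (fun x => \sum_(i <- [::]) F i x) = cst 0%E.
    by apply/funext => x; rewrite /= big_nil.
  exact: integrable0.
have -> : EFin \o (fun x => \sum_(j <- i :: s) F j x) =
   (EFin \o F i) \+ (EFin \o (fun x => \sum_(j <- s) F j x)).
  by apply/funext => x; rewrite /= big_cons EFinD.
exact: integrableD.
Qed.

Lemma Rint_sum I (s : seq I) (F : I -> T -> R) :
  (forall i, mu.-integrable setT (EFin \o F i)) ->
  (\int[mu]_x (\sum_(i <- s) F i x) = \sum_(i <- s) \int[mu]_x F i x)%R.
Proof.
move=> h; elim: s => [|i s ih].
  under eq_Rintegral do rewrite big_nil.
  by rewrite big_nil /Rintegral integral0.
under eq_Rintegral do rewrite big_cons.
rewrite big_cons RintegralD //; first by rewrite ih.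
exact: int_sum.
Qed.

Lemma int_prod (a b : T -> R) :
  measurable_fun setT a -> measurable_fun setT b ->
  mu.-integrable setT (EFin \o (fun x => a x ^+ 2)) ->
  mu.-integrable setT (EFin \o (fun x => b x ^+ 2)) ->
  mu.-integrable setT (EFin \o (fun x => a x * b x)).
Proof.
move=> ma mb ia ib.
have iab := integrableD measurableT ia ib.
apply: (@le_integrable _ _ _ _ _ measurableT _ _ _ _ iab).
  by apply/measurable_EFinP; apply: measurable_funM.
move=> x _ /=; rewrite lee_fin (@ger0_norm _ (a x ^+ 2 + b x ^+ 2)); last by rewrite addr_ge0 ?sqr_ge0.
rewrite normrM -(real_normK (num_real (a x))) -(real_normK (num_real (b x))).
have := normr_ge0 (a x); have := normr_ge0 (b x); nra.
Qed.

End Gen.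

Section Push.
Context d d' (T : measurableType d) (T' : measurableType d') (R : realType)
  (P : probability T R) (X : {mfun T >-> T'}).

Lemma push_int (g : T' -> R) : measurable_fun setT g ->
  P.-integrable setT (EFin \o (fun x => g (X x))) ->
  (distribution P X).-integrable setT (EFin \o g).
Proof.
move=> mg ig.
have := (@integrable_pushforward _ _ _ _ _ X (measurable_funP X) P setT (EFin \o g)
  (measurableT_comp (@EFin_measurable _ setT) mg) ig measurableT).
exact.
Qed.

Lemma push_Rint (g : T' -> R) : measurable_fun setT g ->
  P.-integrable setT (EFin \o (fun x => g (X x))) ->
  (\int[distribution P X]_x g x = \int[P]_x g (X x))%R.
Proof.
move=> mg ig; rewrite /Rintegral.
by rewrite (@integral_pushforward _ _ _ _ _ X (measurable_funP X) P setT (EFin \o g)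
  (measurableT_comp (@EFin_measurable _ setT) mg) ig measurableT).
Qed.
End Push.

Section Main.
Context (R : realType) (J : nat).

Lemma intZ d (T : measurableType d) (mu : {measure set T -> \bar R}) (h : T -> R) c :
  mu.-integrable setT (EFin \o h) -> mu.-integrable setT (EFin \o (fun x => c * h x)).
Proof.
move=> ih; have -> : EFin \o (fun x => c * h x) = (fun x => c%:E * (EFin \o h) x)%E.
  by apply/funext => x; rewrite /= EFinM.
exact: integrableZl.
Qed.

Definition Lf (y : 'cV[R]_J) (x : J.-tuple R) := \sum_i y i 0 * tnth x i.

Lemma LfE y x : sc (y^T *m vec_of x) = Lf y x.
Proof. by rewrite /sc mxE; apply: eq_bigr => i _; rewrite !mxE. Qed.

Lemma Lf_sqr y x : Lf y x ^+ 2 = \sum_i \sum_j (y i 0 * y j 0) * (tnth x i * tnth x j).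
Proof.
rewrite expr2 /Lf mulr_suml; apply: eq_bigr => i _; rewrite mulr_sumr.
by apply: eq_bigr => j _; ring.
Qed.

Lemma dir1 (Sigma : 'M[R]_J) g1 g2 y (P : probability (J.-tuple R) R) :
  spd Sigma -> 0 < g1 -> 0 < g2 -> amb_s Sigma g1 g2 P ->
  exists X : {mfun J.-tuple R >-> R}, (forall x, X x = Lf y x) /\
    amb_xi Sigma g1 g2 y (distribution P X).
Proof.
move=> hS g1p g2p [hm [hmean hmom]].
have mt i : measurable_fun setT (fun x : J.-tuple R => tnth x i) := measurable_tnth i.
have ic i : P.-integrable setT (EFin \o (fun x : J.-tuple R => tnth x i)) := (hm i).1.
have ic2 i : P.-integrable setT (EFin \o (fun x : J.-tuple R => tnth x i ^+ 2)) := (hm i).2.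
have ip i j : P.-integrable setT (EFin \o (fun x : J.-tuple R => tnth x i * tnth x j)).
  exact: int_prod (mt i) (mt j) (ic2 i) (ic2 j).
have mL : measurable_fun setT (Lf y).
  apply: measurable_sum => i; apply: measurable_funM => //; exact: measurable_cst.
have iL : P.-integrable setT (EFin \o Lf y).
  by apply: int_sum => i; apply: intZ.
have iL2 : P.-integrable setT (EFin \o (fun x => Lf y x ^+ 2)).
  have -> : (fun x => Lf y x ^+ 2) = (fun x => \sum_i \sum_j (y i 0 * y j 0) * (tnth x i * tnth x j)).
    by apply/funext => x; rewrite Lf_sqr.
  by apply: int_sum => i; apply: int_sum => j; apply: intZ.
pose X : {mfun J.-tuple R >-> R} := mfun_Sub (mem_set mL : Lf y \in mfun).
exists X; split => // .
have mid : measurable_fun setT (fun x : R => x) := @measurable_id _ _ setT.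
have msq : measurable_fun setT (fun x : R => x ^+ 2) := measurable_funX 2 mid.
split; first exact: (@push_int _ _ _ _ _ P X _ mid iL).
split; first exact: (@push_int _ _ _ _ _ P X _ msq iL2).
split.
  change (`|\int[distribution P X]_x x| <= Num.sqrt g1 * Num.sqrt (sc (y^T *m Sigma *m y))).
  rewrite (@push_Rint _ _ _ _ _ P X _ mid iL) Rint_sum; last by move=> i; apply: intZ.
  have -> : \sum_i \int[P]_x (y i 0 * tnth x i) = sc (y^T *m mean_vec P).
    rewrite /sc mxE; apply: eq_bigr => i _; rewrite RintegralZl // !mxE //.
  exact: (mean_L _ _ Sigma y _ _ hS (ltW g1p) hmean).
change (\int[distribution P X]_x (x ^+ 2) <= g2 * sc (y^T *m Sigma *m y)).
rewrite (@push_Rint _ _ _ _ _ P X _ msq iL2).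
under eq_Rintegral do rewrite /= Lf_sqr.
rewrite Rint_sum; last by move=> i; apply: int_sum => j; apply: intZ.
have -> : \sum_i \int[P]_x (\sum_j (y i 0 * y j 0) * (tnth x i * tnth x j)) =
    sc (y^T *m second_moment P *m y).
  rewrite /sc mxE.
  under [RHS]eq_bigr do rewrite mxE mulr_suml.
  rewrite [RHS]exchange_big /=; apply: eq_bigr => i _.
  rewrite Rint_sum; last by move=> j; apply: intZ.
  by apply: eq_bigr => j _; rewrite RintegralZl // !mxE mulrAC.
exact: (mom_L _ _ Sigma y _ _ hmom).
Qed.


Lemma dir2 (Sigma : 'M[R]_J) g1 g2 y (Q : probability R R) :
  spd Sigma -> 0 < g1 -> 0 < g2 -> amb_xi Sigma g1 g2 y Q ->
  exists X : {mfun R >-> J.-tuple R},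
    (forall t, X t = mktuple (fun i : 'I_J => (@cvec R J Sigma y) i 0 * t)) /\
    amb_s Sigma g1 g2 (distribution Q X).
Proof.
move=> hS g1p g2p [i1 [i2 [hmean hmom]]].
set c := @cvec R J Sigma y.
pose Z (t : R) : J.-tuple R := mktuple (fun i : 'I_J => c i 0 * t).
have mid : measurable_fun setT (fun x : R => x) := @measurable_id _ _ setT.
have ZE i : (fun t => tnth (Z t) i) = (fun t => c i 0 * t).
  by apply/funext => t; rewrite tnth_mktuple.
have mZ : measurable_fun setT Z.
  apply/measurable_fun_tnthP => i.
  have -> : ((tnth (T:=R))^~ i \o Z) = (fun t => c i 0 * t) by rewrite -ZE.
  by apply: measurable_funM => //; exact: measurable_cst.
pose X : {mfun R >-> J.-tuple R} := mfun_Sub (mem_set mZ : Z \in mfun).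
exists X; split => //.
have cE : @cvec R J Sigma y = c by [].
clearbody c.
have mt i : measurable_fun setT (fun x : J.-tuple R => tnth x i) := measurable_tnth i.
have ict i : Q.-integrable setT (EFin \o (fun t => tnth (X t) i)).
  by rewrite /= ZE; apply: intZ.
have ict2 i : Q.-integrable setT (EFin \o (fun t => tnth (X t) i ^+ 2)).
  have -> : (fun t => tnth (X t) i ^+ 2) = (fun t => c i 0 ^+ 2 * t ^+ 2).
    by apply/funext => t; rewrite /= tnth_mktuple exprMn.
  exact: intZ.
have icp i j : Q.-integrable setT (EFin \o (fun t => tnth (X t) i * tnth (X t) j)).
  have -> : (fun t => tnth (X t) i * tnth (X t) j) = (fun t => (c i 0 * c j 0) * t ^+ 2).
    by apply/funext => t; rewrite /= !tnth_mktuple; ring.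
  exact: intZ.
have hmv : mean_vec (distribution Q X) = fine (\int[Q]_x x%:E) *: c.
  apply/matrixP => i j; rewrite !mxE (ord1 j).
  change (\int[distribution Q X]_x tnth x i = fine (\int[Q]_x x%:E) * c i 0).
  rewrite (@push_Rint _ _ _ _ _ Q X _ (mt i) (ict i)) /= ZE RintegralZl // mulrC //.
have hsm : second_moment (distribution Q X) = fine (\int[Q]_x (x ^+ 2)%:E) *: (c *m c^T).
  apply/matrixP => i j; rewrite !mxE big_ord1 !mxE.
  change (\int[distribution Q X]_x (tnth x i * tnth x j) =
     fine (\int[Q]_x (x ^+ 2)%:E) * (c i 0 * c j 0)).
  have mp : measurable_fun setT (fun x : J.-tuple R => tnth x i * tnth x j).
    exact: measurable_funM.
  rewrite (@push_Rint _ _ _ _ _ Q X _ mp (icp i j)) /=.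
  rewrite (@eq_Rintegral _ _ _ Q setT (fun x => (c i 0 * c j 0) * x ^+ 2)); last by move=> x _; rewrite !tnth_mktuple; ring.
  rewrite RintegralZl // mulrC //.
split.
  move=> i; split.
    exact: (@push_int _ _ _ _ _ Q X _ (mt i) (ict i)).
  exact: (@push_int _ _ _ _ _ Q X _ (measurable_funX 2 (mt i)) (ict2 i)).
split.
  rewrite hmv -cE; exact: (mean_c _ _ Sigma y _ _ hS (ltW g1p) hmean).
rewrite hsm -cE; exact: (mom_c _ _ Sigma y _ _ hS (ltW g2p) hmom).
Qed.

End Main.

Section Zero.
Context (R : realType).

Lemma xi_zero (Q : probability R R) (A : set R) : measurable A ->
  Q.-integrable setT (fun x : R => (x ^+ 2)%:E) ->
  fine (\int[Q]_x (x ^+ 2)%:E) <= 0 -> Q A = Q [set _ : R | A 0].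
Proof.
move=> mA i2 h.
have h0 : (\int[Q]_x (x ^+ 2)%:E = 0)%E.
  have fin := integrable_fin_num measurableT i2.
  have ge0 : (0 <= \int[Q]_x (x ^+ 2)%:E)%E.
    by apply: integral_ge0 => x _; rewrite lee_fin sqr_ge0.
  rewrite -(fineK fin); congr (_%:E); apply/eqP; rewrite eq_le h /=.
  exact: fine_ge0.
have : ae_eq Q setT (fun x : R => (x ^+ 2)%:E) (cst 0%E).
  apply/ae_eq_integral_abs => //.
    exact: measurable_int i2.
  rewrite -h0; apply: eq_integral => x _; rewrite gee0_abs // lee_fin sqr_ge0 //.
case => N [mN N0 sN].
have sub : [set t : R | t != 0] `<=` N.
  move=> t /= t0; apply: sN => /= /(_ I) /eqP; rewrite eqe sqrf_eq0.
  by apply/negP.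
case: (pselect (A 0)) => A0.
  have -> : [set _ : R | A 0] = setT by apply/seteqP; split.
  rewrite probability_setT.
  have c0 : Q (~` A) = 0%E.
    apply: (subset_measure0 _ _ _ N0) => //; first exact: measurableC.
    by move=> t /= nAt; apply: sub => /=; apply: contra_notN nAt => /eqP ->.
  by rewrite -(setCK A) probability_setC ?c0 ?sube0 //; exact: measurableC.
have -> : [set _ : R | A 0] = set0 by apply/seteqP; split.
rewrite measure0; apply: (subset_measure0 _ _ _ N0) => //.
by move=> t At; apply: sub => /=; apply/eqP => t0; apply: A0; rewrite -t0.
Qed.

End Zero.

Theorem lemma1 (R : realType) (J : nat) (Sigma : 'M[R]_J) (g1 g2 : R)
  (y : 'cV[R]_J) (f : R -> R) :
  spd Sigma -> 0 < g1 -> 0 < g2 -> measurable_fun setT f ->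
  ereal_inf [set P [set x : J.-tuple R | f (sc (y^T *m vec_of x)) <= 0]
            | P in amb_s Sigma g1 g2] =
  ereal_inf [set P [set x : R | f x <= 0] | P in amb_xi Sigma g1 g2 y].
Proof.
move=> hS g1p g2p mf.
congr ereal_inf; apply/seteqP; split => _ [P HP <-].
  have [X [XE HX]] := @dir1 R J Sigma g1 g2 y P hS g1p g2p HP.
  exists (distribution P X) => //.
  rewrite /distribution /pushforward; congr (P _).
  by apply/funext => x /=; rewrite XE LfE.
have [X [XE HX]] := @dir2 R J Sigma g1 g2 y P hS g1p g2p HP.
exists (distribution P X) => //.
rewrite /distribution /pushforward.
set c := @cvec R J Sigma y.
have scE t : sc (y^T *m vec_of (X t)) = t * (B R J Sigma y y)^-1 * B R J Sigma y y.
  rewrite XE /sc mxE -mulrA.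
  have -> : (B R J Sigma y y)^-1 * B R J Sigma y y = sc (y^T *m c).
    by rewrite /c /cvec -scalemxAr /sc mxE mulmxA.
  rewrite /sc mxE mulr_sumr; apply: eq_bigr => i _; rewrite !mxE tnth_mktuple /cvec !mxE; ring.
have mA : measurable [set x : R | f x <= 0].
  have mc : measurable_fun setT (fun _ : R => 0 : R) by exact: measurable_cst.
  have := measurable_fun_ler mf mc measurableT (Y := [set true]) I.
  by rewrite setTI.
have [q0|qn0] := eqVneq (B R J Sigma y y) 0.
  transitivity (P [set _ : R | f 0 <= 0]).
    by congr (P _); apply/funext => t /=; rewrite scE q0 mulr0.
  case: HP => _ [i2 [_ hmom]].
  symmetry; apply: xi_zero => //.
  by move: hmom; rewrite -/(B R J Sigma y y) q0 mulr0.
congr (P _); apply/funext => t /=; rewrite scE divrK //.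
by rewrite unitfE.
Qed.
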